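(* Let $F\colon\Omega\to\Omega$ be a piecewise translation in $\mathbb{R}^d$ with any number $m$ of branches, and let $\mathcal{F}\colon\Omega\to\Sigma$ be its fate map. If $\omega\in\Sigma$ is not eventually periodic (i.e. there are no $n\ge0$, $p\ge1$ with $\sigma^{n+p}\omega=\sigma^n\omega$), then $\mathrm{Leb}(\mathcal{F}^{-1}(\omega))=0$.
   Context: A region is a compact subset of $\mathbb{R}^d$ which equals the closure of its interior. A piecewise translation with $m$ branches: $\Omega\subset\mathbb{R}^d$ is a region, $\Omega=P_0\cup\dots\cup P_{m-1}$ with each $P_i$ a region, distinct $P_i$ intersecting only in boundaries, $\mathrm{Leb}(\partial P_i)=0$; vectors $v_i$ satisfy $x+v_i\in\Omega$ for $x\in P_i$; $i(x)$ is an index with $x\in P_{i(x)}$ (boundary ambiguity resolved by a fixed measurable rule), and $F(x)=x+v_{i(x)}$. $\Sigma=\{0,\dots,m-1\}^{\mathbb{N}_0}$ with left shift $\sigma$. The fate map is $\mathcal{F}(x)=(i(x),i(F(x)),i(F^2(x)),\dots)$; it satisfies $\mathcal{F}\circ F=\sigma\circ\mathcal{F}$. *)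

(* Defs.v *)
From Stdlib Require Import Reals.
From Stdlib Require Vectors.Fin.
Open Scope R_scope.

Definition pt (d : nat) := Fin.t d -> R.

Definition vadd {d} (x v : pt d) : pt d := fun k => x k + v k.

(* open sup-norm ball (induces the Euclidean topology) *)
Definition ball {d} (x : pt d) (r : R) (y : pt d) : Prop :=
  forall k, Rabs (y k - x k) < r.

Definition interior {d} (A : pt d -> Prop) (x : pt d) : Prop :=
  exists r, 0 < r /\ forall y, ball x r y -> A y.
Definition closure {d} (A : pt d -> Prop) (x : pt d) : Prop :=
  forall r, 0 < r -> exists y, ball x r y /\ A y.
Definition boundary {d} (A : pt d -> Prop) (x : pt d) : Prop :=
  closure A x /\ ~ interior A x.
Definition is_open {d} (A : pt d -> Prop) : Prop := forall x, A x -> interior A x.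
Definition is_closed {d} (A : pt d -> Prop) : Prop := forall x, closure A x -> A x.
Definition bounded {d} (A : pt d -> Prop) : Prop :=
  exists M, forall x, A x -> forall k, Rabs (x k) <= M.
(* Heine-Borel: compact subsets of R^d are the closed bounded ones *)
Definition compact {d} (A : pt d -> Prop) : Prop := is_closed A /\ bounded A.

Definition region {d} (A : pt d -> Prop) : Prop :=
  compact A /\ forall x, A x <-> closure (interior A) x.

Fixpoint prod_fin (d : nat) : (Fin.t d -> R) -> R :=
  match d with
  | O => fun _ => 1
  | S n => fun f => f Fin.F1 * prod_fin n (fun i => f (Fin.FS i))
  end.

Definition in_box {d} (a b : pt d) (x : pt d) : Prop :=
  forall k, a k <= x k <= b k.
Definition box_vol {d} (a b : pt d) : R := prod_fin d (fun k => b k - a k).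

(* Lebesgue outer measure of A is at most eps: A is covered by countably many
   closed boxes of total volume <= eps *)
Definition outer_le {d} (A : pt d -> Prop) (eps : R) : Prop :=
  exists a b : nat -> pt d,
    (forall n k, a n k <= b n k) /\
    (forall x, A x -> exists n, in_box (a n) (b n) x) /\
    (forall N, sum_f_R0 (fun n => box_vol (a n) (b n)) N <= eps).

Definition leb_null {d} (A : pt d -> Prop) : Prop :=
  forall eps, 0 < eps -> outer_le A eps.

(* Lebesgue measurability (outer regularity characterization) *)
Definition leb_measurable {d} (E : pt d -> Prop) : Prop :=
  forall eps, 0 < eps -> exists U, is_open U /\ (forall x, E x -> U x) /\
    outer_le (fun x => U x /\ ~ E x) eps.

Definition piecewise_translation {d} (Omega : pt d -> Prop) (m : nat)
  (P : nat -> pt d -> Prop) (v : nat -> pt d) (i : pt d -> nat) : Prop :=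
  region Omega /\
  (forall k, (k < m)%nat -> region (P k)) /\
  (forall x, Omega x <-> exists k, (k < m)%nat /\ P k x) /\
  (forall k l x, (k < m)%nat -> (l < m)%nat -> k <> l -> P k x -> P l x ->
      boundary (P k) x /\ boundary (P l) x) /\
  (forall k, (k < m)%nat -> leb_null (boundary (P k))) /\
  (forall k x, (k < m)%nat -> P k x -> Omega (vadd x (v k))) /\
  (forall x, Omega x -> (i x < m)%nat /\ P (i x) x) /\
  (forall k, (k < m)%nat -> leb_measurable (fun x => Omega x /\ i x = k)).

Definition pt_map {d} (v : nat -> pt d) (i : pt d -> nat) (x : pt d) : pt d :=
  vadd x (v (i x)).

Definition fate {d} (v : nat -> pt d) (i : pt d -> nat) (x : pt d) : nat -> nat :=
  fun n => i (Nat.iter n (pt_map v i) x).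

Definition eventually_periodic (w : nat -> nat) : Prop :=
  exists n p, (1 <= p)%nat /\ forall k, w (n + p + k)%nat = w (n + k)%nat.

(* Main.v *)
Require Import Defs.
From Stdlib Require Import Reals.
Open Scope R_scope.
From Stdlib Require Import Lra Lia List ZArith Classical FunctionalExtensionality ClassicalEpsilon FinFun Cantor.
Import ListNotations.
Open Scope R_scope.

Lemma prod_fin_ext : forall d (f g : Fin.t d -> R), (forall k, f k = g k) -> prod_fin d f = prod_fin d g.
Proof.
  induction d; intros f g H; simpl; auto.
  rewrite H. f_equal. apply IHd. intros; apply H.
Qed.

Lemma prod_fin_const : forall d c, prod_fin d (fun _ => c) = c ^ d.
Proof. induction d; intros; simpl; auto. rewrite IHd; auto. Qed.

Lemma prod_fin_nonneg : forall d (f : Fin.t d -> R), (forall k, 0 <= f k) -> 0 <= prod_fin d f.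
Proof.
  induction d; intros f H; simpl. lra.
  apply Rmult_le_pos; auto.
Qed.

Lemma sum_nonneg_le : forall (f : nat -> R) N M, (forall n, 0 <= f n) -> (N <= M)%nat ->
  sum_f_R0 f N <= sum_f_R0 f M.
Proof.
  intros f N M Hf H. induction H. lra. simpl. specialize (Hf (S m)). lra.
Qed.

Lemma outer_le_mono {d} (A B : pt d -> Prop) e1 e2 :
  (forall x, A x -> B x) -> e2 <= e1 -> outer_le B e2 -> outer_le A e1.
Proof.
  intros HAB He [a [b [H1 [H2 H3]]]]. exists a, b. split; [|split]; auto.
  intros N. specialize (H3 N). lra.
Qed.

Lemma box_vol_nonneg {d} (a b : pt d) : (forall k, a k <= b k) -> 0 <= box_vol a b.
Proof. intros H. unfold box_vol. apply prod_fin_nonneg. intros k; specialize (H k); lra. Qed.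

Lemma ev2 n : Nat.even (2*n) = true.
Proof. rewrite Nat.even_mul. reflexivity. Qed.
Lemma ev2s n : Nat.even (S (2*n)) = false.
Proof. rewrite Nat.even_succ, Nat.odd_mul. reflexivity. Qed.
Lemma sumS f n : sum_f_R0 f (S n) = sum_f_R0 f n + f (S n).
Proof. reflexivity. Qed.

Lemma outer_le_union {d} (A B : pt d -> Prop) e1 e2 :
  outer_le A e1 -> outer_le B e2 -> outer_le (fun x => A x \/ B x) (e1 + e2).
Proof.
  intros [a [b [Ha1 [Ha2 Ha3]]]] [a' [b' [Hb1 [Hb2 Hb3]]]].
  exists (fun n => if Nat.even n then a (Nat.div2 n) else a' (Nat.div2 n)).
  exists (fun n => if Nat.even n then b (Nat.div2 n) else b' (Nat.div2 n)).
  split; [|split].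
  - intros n k. destruct (Nat.even n); auto.
  - intros x [Hx|Hx].
    + destruct (Ha2 x Hx) as [n Hn]. exists (2*n)%nat.
      rewrite ev2, Nat.div2_double. auto.
    + destruct (Hb2 x Hx) as [n Hn]. exists (S (2*n))%nat.
      rewrite ev2s, Nat.div2_succ_double. auto.
  - set (c := fun n => box_vol (if Nat.even n then a (Nat.div2 n) else a' (Nat.div2 n))
                                (if Nat.even n then b (Nat.div2 n) else b' (Nat.div2 n))).
    assert (Hc0 : forall n, 0 <= c n).
    { intros n; unfold c; destruct (Nat.even n); apply box_vol_nonneg; auto. }
    assert (Hpair : forall N, sum_f_R0 c (S (2*N)) =
       sum_f_R0 (fun n => box_vol (a n) (b n)) N + sum_f_R0 (fun n => box_vol (a' n) (b' n)) N).
    { induction N.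
      - simpl sum_f_R0. unfold c. cbn -[box_vol]. ring.
      - replace (S (2 * S N)) with (S (S (S (2*N)))) by lia.
        rewrite !sumS. rewrite <- sumS, IHN. unfold c.
        replace (S (S (2*N))) with (2 * (S N))%nat by lia.
        rewrite ev2, ev2s, Nat.div2_double, Nat.div2_succ_double. simpl sum_f_R0. ring. }
    intros N. apply Rle_trans with (sum_f_R0 c (S (2*N))).
    + apply sum_nonneg_le; auto. lia.
    + rewrite Hpair. specialize (Ha3 N). specialize (Hb3 N). lra.
Qed.

Lemma outer_le_translate {d} (A : pt d -> Prop) (t : pt d) e :
  outer_le A e -> outer_le (fun x => A (vadd x t)) e.
Proof.
  intros [a [b [H1 [H2 H3]]]].
  exists (fun n k => a n k - t k), (fun n k => b n k - t k). split; [|split].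
  - intros n k. specialize (H1 n k). lra.
  - intros x Hx. destruct (H2 _ Hx) as [n Hn]. exists n. intros k. specialize (Hn k).
    unfold vadd in Hn. lra.
  - intros N. eapply Rle_trans; [|apply (H3 N)]. right. apply sum_eq. intros i _.
    unfold box_vol. apply prod_fin_ext. intros; ring.
Qed.
Definition fcons {n} (c : Z) (f : Fin.t n -> Z) : Fin.t (S n) -> Z :=
  fun k => Fin.caseS' k (fun _ => Z) c f.

Fixpoint grid (d : nat) : (Fin.t d -> Z) -> nat -> list (Fin.t d -> Z) :=
  match d with
  | O => fun _ _ => [fun _ => 0%Z]
  | S n => fun lo c => flat_map (fun i => map (fcons (lo Fin.F1 + Z.of_nat i)%Z)
                                          (grid n (fun k => lo (Fin.FS k)) c)) (seq 0 c)
  end.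

Lemma fcons_eta {n} (y : Fin.t (S n) -> Z) : y = fcons (y Fin.F1) (fun k => y (Fin.FS k)).
Proof.
  apply functional_extensionality. intros k. unfold fcons.
  pattern k. apply Fin.caseS'; reflexivity.
Qed.

Lemma grid_in1 : forall d lo c y, In y (grid d lo c) ->
  forall k, (lo k <= y k < lo k + Z.of_nat c)%Z.
Proof.
  induction d; intros lo c y H k.
  - apply Fin.case0. exact k.
  - simpl in H. apply in_flat_map in H. destruct H as [i [Hi H]].
    apply in_map_iff in H. destruct H as [y' [Hy H]]. subst y.
    apply in_seq in Hi.
    pattern k. apply Fin.caseS'.
    + unfold fcons. simpl. lia.
    + intros p. unfold fcons. simpl. apply (IHd _ _ _ H p).
Qed.

Lemma grid_in2 : forall d lo c y, (forall k, (lo k <= y k < lo k + Z.of_nat c)%Z) ->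
  In y (grid d lo c).
Proof.
  induction d; intros lo c y H.
  - simpl. left. apply functional_extensionality. intros k. apply Fin.case0. exact k.
  - simpl. apply in_flat_map. exists (Z.to_nat (y Fin.F1 - lo Fin.F1)). split.
    + apply in_seq. specialize (H Fin.F1). lia.
    + apply in_map_iff. exists (fun k => y (Fin.FS k)). split.
      * apply eq_trans with (fcons (y Fin.F1) (fun k => y (Fin.FS k))).
        -- f_equal. specialize (H Fin.F1). lia.
        -- symmetry; apply fcons_eta.
      * apply IHd. intros k. apply (H (Fin.FS k)).
Qed.

Lemma length_flat_map_const {A B} (f : A -> list B) l n :
  (forall x, length (f x) = n) -> length (flat_map f l) = (length l * n)%nat.
Proof.
  intros H. induction l; simpl; auto. rewrite length_app, H, IHl. lia.
Qed.

Lemma grid_len : forall d lo c, length (grid d lo c) = (c ^ d)%nat.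
Proof.
  induction d; intros lo c; simpl; auto.
  rewrite (length_flat_map_const _ _ (c ^ d)%nat).
  - rewrite length_seq. lia.
  - intros x. rewrite length_map. apply IHd.
Qed.

Lemma NoDup_flat_map {A B} (f : A -> list B) l :
  NoDup l -> (forall x, In x l -> NoDup (f x)) ->
  (forall x y e, In x l -> In y l -> x <> y -> In e (f x) -> In e (f y) -> False) ->
  NoDup (flat_map f l).
Proof.
  induction l as [|a l IH]; intros Hl Hf Hd; simpl. constructor.
  inversion Hl; subst. apply NoDup_app.
  - apply Hf; simpl; auto.
  - apply IH; auto. intros; apply Hf; simpl; auto.
    intros x y e Hx Hy; apply Hd; simpl; auto.
  - intros e He1 He2. apply in_flat_map in He2. destruct He2 as [y [Hy He2]].
    apply (Hd a y e); simpl; auto. intros ->; auto.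
Qed.

Lemma fcons_inj {n} c c' (f f' : Fin.t n -> Z) : fcons c f = fcons c' f' -> c = c' /\ f = f'.
Proof.
  intros H. split.
  - apply (f_equal (fun g => g Fin.F1)) in H. exact H.
  - apply functional_extensionality. intros k.
    apply (f_equal (fun g => g (Fin.FS k))) in H. exact H.
Qed.

Lemma grid_nodup : forall d lo c, NoDup (grid d lo c).
Proof.
  induction d; intros lo c; simpl.
  - constructor; auto. constructor.
  - apply NoDup_flat_map.
    + apply seq_NoDup.
    + intros x _. apply FinFun.Injective_map_NoDup; auto.
      intros f f' H. apply fcons_inj in H. tauto.
    + intros x y e _ _ Hxy H1 H2.
      apply in_map_iff in H1. destruct H1 as [f [Hf _]].
      apply in_map_iff in H2. destruct H2 as [f' [Hf' _]].
      subst e. apply fcons_inj in Hf'. destruct Hf' as [Hc _]. lia.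
Qed.
Definition fl (r : R) : Z := (up r - 1)%Z.

Lemma fl_spec r : IZR (fl r) <= r < IZR (fl r) + 1.
Proof. unfold fl. rewrite minus_IZR. destruct (archimed r). lra. Qed.

Lemma fl_unique z r : IZR z <= r < IZR z + 1 -> fl r = z.
Proof.
  intros H. unfold fl. assert (z + 1 = up r)%Z.
  { apply tech_up; rewrite plus_IZR; lra. }
  lia.
Qed.

Lemma fl_ge a r : IZR a <= r -> (a <= fl r)%Z.
Proof.
  intros H. destruct (fl_spec r). assert (IZR a < IZR (fl r + 1)) by (rewrite plus_IZR; lra).
  apply lt_IZR in H2. lia.
Qed.

Lemma pow2_pos q : 0 < 2 ^ q.
Proof. apply pow_lt; lra. Qed.

Lemma pow2_IZR e : IZR (2 ^ Z.of_nat e) = 2 ^ e.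
Proof.
  induction e. reflexivity.
  rewrite Nat2Z.inj_succ, Z.pow_succ_r by lia. rewrite mult_IZR, IHe. simpl. ring.
Qed.

Definition flv {d} q (x : pt d) : Fin.t d -> Z := fun k => fl (x k * 2 ^ q).
Definition cell {d} q (z : Fin.t d -> Z) (x : pt d) : Prop :=
  forall k, IZR (z k) <= x k * 2 ^ q <= IZR (z k) + 1.
Definition ocell {d} q (z : Fin.t d -> Z) (x : pt d) : Prop :=
  forall k, IZR (z k) < x k * 2 ^ q < IZR (z k) + 1.

Lemma cell_self {d} q (x : pt d) : cell q (flv q x) x.
Proof. intros k. unfold flv. destruct (fl_spec (x k * 2 ^ q)). lra. Qed.

Lemma ocell_flv {d} q z (x : pt d) : ocell q z x -> z = flv q x.
Proof.
  intros H. apply functional_extensionality. intros k. unfold flv.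
  symmetry. apply fl_unique. specialize (H k). lra.
Qed.

Lemma nest {d} p q (x u : pt d) : (p <= q)%nat -> cell q (flv q x) u -> cell p (flv p x) u.
Proof.
  intros Hpq H k. specialize (H k). unfold flv in *.
  set (e := (q - p)%nat).
  assert (Hq : 2 ^ q = 2 ^ p * 2 ^ e) by (unfold e; rewrite <- pow_add; f_equal; lia).
  set (A := fl (x k * 2 ^ p)). set (B := fl (x k * 2 ^ q)).
  fold B in H. destruct (fl_spec (x k * 2 ^ p)) as [HA1 HA2]. fold A in HA1, HA2.
  destruct (fl_spec (x k * 2 ^ q)) as [HB1 HB2]. fold B in HB1, HB2.
  pose proof (pow2_pos p). pose proof (pow2_pos e).
  assert (G1 : (A * 2 ^ Z.of_nat e <= B)%Z).
  { apply fl_ge. rewrite mult_IZR, pow2_IZR, Hq. nra. }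
  assert (G2 : (B < (A + 1) * 2 ^ Z.of_nat e)%Z).
  { apply lt_IZR. rewrite mult_IZR, pow2_IZR, plus_IZR. rewrite Hq in HB1. nra. }
  assert (G3 : (B + 1 <= (A + 1) * 2 ^ Z.of_nat e)%Z) by lia.
  apply IZR_le in G1. apply IZR_le in G3.
  rewrite mult_IZR, pow2_IZR in G1. rewrite plus_IZR, mult_IZR, pow2_IZR, plus_IZR in G3.
  rewrite Hq in H. split.
  - apply Rmult_le_reg_r with (2 ^ e); auto. nra.
  - apply Rmult_le_reg_r with (2 ^ e); auto. nra.
Qed.

Lemma sub_idx {d} p q (x : pt d) w :
  (forall u, cell q (flv q x) u -> cell p w u) -> w = flv p x.
Proof.
  intros H. apply functional_extensionality. intros k. unfold flv.
  set (z := flv q x).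
  pose proof (pow2_pos p) as HP. pose proof (pow2_pos q) as HQ.
  set (P := 2 ^ p) in *. set (Q := 2 ^ q) in *.
  assert (HiQ : / Q * Q = 1) by (field; lra).
  assert (HiQp : 0 < / Q) by (apply Rinv_0_lt_compat; lra).
  set (iQ := / Q) in *.
  assert (Hl := H (fun j => IZR (z j) * iQ)). assert (Hu := H (fun j => (IZR (z j) + 1) * iQ)).
  assert (Cl : cell q z (fun j => IZR (z j) * iQ)).
  { intros j. fold Q. replace (IZR (z j) * iQ * Q) with (IZR (z j) * (iQ * Q)) by ring.
    rewrite HiQ. lra. }
  assert (Cu : cell q z (fun j => (IZR (z j) + 1) * iQ)).
  { intros j. fold Q. replace ((IZR (z j) + 1) * iQ * Q) with ((IZR (z j) + 1) * (iQ * Q)) by ring.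
    rewrite HiQ. lra. }
  specialize (Hl Cl k). specialize (Hu Cu k). simpl in Hl, Hu. fold P in Hl, Hu.
  assert (Hz := cell_self q x k). fold z Q in Hz.
  symmetry. apply fl_unique. fold P.
  assert (Ex : x k * P = (x k * Q) * iQ * P).
  { replace ((x k * Q) * iQ * P) with (x k * P * (iQ * Q)) by ring. rewrite HiQ; ring. }
  rewrite Ex. split.
  - assert (IZR (z k) * iQ * P <= x k * Q * iQ * P).
    { apply Rmult_le_compat_r; [lra|]. apply Rmult_le_compat_r; lra. }
    lra.
  - assert (x k * Q * iQ * P < (IZR (z k) + 1) * iQ * P).
    { apply Rmult_lt_compat_r; [lra|]. apply Rmult_lt_compat_r; [lra|].
      destruct (fl_spec (x k * Q)). unfold z, flv. fold Q. lra. }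
    lra.
Qed.

Lemma cell_close {d} q (x u : pt d) k : cell q (flv q x) u -> Rabs (u k - x k) <= / 2 ^ q.
Proof.
  intros H. specialize (H k). destruct (cell_self q x k).
  pose proof (pow2_pos q).
  assert (Rabs (u k * 2 ^ q - x k * 2 ^ q) <= 1) by (apply Rabs_le; lra).
  replace (u k * 2 ^ q - x k * 2 ^ q) with ((u k - x k) * 2 ^ q) in H3 by ring.
  rewrite Rabs_mult, (Rabs_right (2 ^ q)) in H3 by lra.
  apply Rmult_le_reg_r with (2 ^ q); auto. rewrite Rinv_l; lra.
Qed.

Lemma INR_le_pow2 n : INR n <= 2 ^ n.
Proof.
  induction n. simpl; lra. rewrite S_INR. simpl.
  assert (1 <= 2 ^ n) by (apply pow_R1_Rle; lra). lra.
Qed.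

Lemma small_pow2 r : 0 < r -> exists q, / 2 ^ q < r.
Proof.
  intros Hr. destruct (archimed (/ r)) as [H1 _].
  exists (Z.to_nat (up (/ r))).
  assert (0 < / r) by (apply Rinv_0_lt_compat; auto).
  assert (Hup : (0 < up (/ r))%Z) by (apply lt_IZR; simpl; lra).
  pose proof (INR_le_pow2 (Z.to_nat (up (/ r)))).
  rewrite INR_IZR_INZ, Z2Nat.id in H0 by lia.
  pose proof (pow2_pos (Z.to_nat (up (/ r)))).
  apply Rmult_lt_reg_r with (2 ^ Z.to_nat (up (/ r))); auto. rewrite Rinv_l by lra.
  apply Rmult_lt_reg_l with (/ r); auto.
  rewrite <- Rmult_assoc, Rinv_l by lra. lra.
Qed.

Lemma Rabs_le_inv a b : Rabs a <= b -> -b <= a <= b.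
Proof. unfold Rabs; destruct Rcase_abs; lra. Qed.

Lemma ex_min (P : nat -> Prop) : (exists n, P n) -> exists n, P n /\ forall m, (m < n)%nat -> ~ P m.
Proof.
  intros [n Hn]. revert Hn. induction n as [n IH] using (well_founded_induction lt_wf).
  intros Hn. destruct (classic (exists m, (m < n)%nat /\ P m)) as [[m [Hm1 Hm2]]|Hno].
  - exact (IH m Hm1 Hm2).
  - exists n. split; auto. intros m Hm HP. apply Hno; eauto.
Qed.

Definition sel {d} (K : pt d -> Prop) q (z : Fin.t d -> Z) : Prop :=
  (forall u, cell q z u -> K u) /\
  forall p w, (p < q)%nat -> (forall u, cell q z u -> cell p w u) -> ~ (forall u, cell p w u -> K u).

Lemma cells_disj {d} (K : pt d -> Prop) q z q' z' y :
  sel K q z -> sel K q' z' -> (q <> q' \/ z <> z') -> ocell q z y -> ocell q' z' y -> False.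
Proof.
  intros Hs Hs' Hne Ho Ho'.
  apply ocell_flv in Ho. apply ocell_flv in Ho'. subst z z'.
  destruct (Nat.lt_total q q') as [Hlt|[Heq|Hgt]].
  - destruct Hs' as [_ Hs']. apply (Hs' q (flv q y) Hlt).
    + intros u Hu. apply (nest q q' y u); auto; lia.
    + apply Hs.
  - subst. destruct Hne; auto.
  - destruct Hs as [_ Hs]. apply (Hs q' (flv q' y) Hgt).
    + intros u Hu. apply (nest q' q y u); auto; lia.
    + apply Hs'.
Qed.

Definition Rq (M : R) q : Z := (up (M * 2 ^ q) + 1)%Z.
Definition LL d (M : R) q := grid d (fun _ => (- Rq M q)%Z) (Z.to_nat (2 * Rq M q + 1)).
Definition zz d (M : R) n := nth (snd (Cantor.of_nat n)) (LL d M (fst (Cantor.of_nat n))) (fun _ => 0%Z).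
Definition good {d} (K : pt d -> Prop) (M : R) n : Prop :=
  (snd (Cantor.of_nat n) < length (LL d M (fst (Cantor.of_nat n))))%nat /\
  sel K (fst (Cantor.of_nat n)) (zz d M n).
Definition ca {d} (K : pt d -> Prop) M n : pt d :=
  if excluded_middle_informative (good K M n)
  then (fun k => IZR (zz d M n k) / 2 ^ fst (Cantor.of_nat n)) else (fun _ => 0).
Definition cb {d} (K : pt d -> Prop) M n : pt d :=
  if excluded_middle_informative (good K M n)
  then (fun k => (IZR (zz d M n k) + 1) / 2 ^ fst (Cantor.of_nat n)) else (fun _ => 0).

Lemma ca_le_cb {d} (K : pt d -> Prop) M n k : ca K M n k <= cb K M n k.
Proof.
  unfold ca, cb. destruct excluded_middle_informative; [|lra].
  pose proof (pow2_pos (fst (Cantor.of_nat n))).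
  unfold Rdiv. apply Rmult_le_compat_r; [|lra]. left; apply Rinv_0_lt_compat; auto.
Qed.

Lemma cell_in_box {d} q z (x : pt d) : cell q z x ->
  in_box (fun k => IZR (z k) / 2 ^ q) (fun k => (IZR (z k) + 1) / 2 ^ q) x.
Proof.
  intros H k. specialize (H k). pose proof (pow2_pos q).
  split; unfold Rdiv.
  - apply Rmult_le_reg_r with (2 ^ q); auto. rewrite Rmult_assoc, Rinv_l; lra.
  - apply Rmult_le_reg_r with (2 ^ q); auto. rewrite Rmult_assoc, Rinv_l; lra.
Qed.

Lemma ML_cover {d} (K : pt d -> Prop) M :
  is_open K -> (forall x, K x -> forall k, Rabs (x k) <= M) ->
  forall x, K x -> exists n, in_box (ca K M n) (cb K M n) x.
Proof.
  intros HK HKb x Hx.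
  destruct (HK x Hx) as [r [Hr Hball]].
  destruct (small_pow2 r Hr) as [q0 Hq0].
  destruct (ex_min (fun q => forall u, cell q (flv q x) u -> K u)) as [q [Hq Hmin]].
  { exists q0. intros u Hu. apply Hball. intros k. pose proof (cell_close q0 x u k Hu). lra. }
  assert (Hsel : sel K q (flv q x)).
  { split; auto. intros p w Hpq Hinc HKw. apply sub_idx in Hinc. subst w.
    apply (Hmin p Hpq HKw). }
  assert (Hin : In (flv q x) (LL d M q)).
  { unfold LL. apply grid_in2. intros k. unfold flv, Rq.
    pose proof (HKb x Hx k) as Hb. apply Rabs_le_inv in Hb.
    pose proof (pow2_pos q).
    destruct (fl_spec (x k * 2 ^ q)) as [F1 F2]. destruct (archimed (M * 2 ^ q)) as [A1 A2].
    assert (Hup : (0 <= up (M * 2 ^ q))%Z).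
    { apply le_IZR. simpl. assert (0 <= M) by lra. nra. }
    rewrite Z2Nat.id by lia.
    assert (G1 : (fl (x k * 2 ^ q) < up (M * 2 ^ q))%Z).
    { apply lt_IZR. nra. }
    assert (G2 : (- up (M * 2 ^ q) - 1 < fl (x k * 2 ^ q))%Z).
    { apply lt_IZR. rewrite minus_IZR, opp_IZR. nra. }
    lia. }
  destruct (In_nth _ _ (fun _ => 0%Z) Hin) as [p [Hp Hnth]].
  exists (Cantor.to_nat (q, p)).
  unfold ca, cb. rewrite cancel_of_to. simpl fst.
  destruct excluded_middle_informative as [_|Hng].
  - unfold zz. rewrite cancel_of_to. simpl. rewrite Hnth. apply cell_in_box, cell_self.
  - exfalso. apply Hng. unfold good, zz. rewrite cancel_of_to. simpl. rewrite Hnth. auto.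
Qed.

Lemma arith1 (Y Z t Q E : R) : 0 < Q -> 0 < E ->
  (Z / Q + t) * (Q * E) < Y -> Y <= (Z / Q + t) * (Q * E) + E - 2 ->
  Z < (Y / (Q * E) - t) * Q < Z + 1.
Proof.
  intros HQ HE H1 H2.
  replace ((Y / (Q * E) - t) * Q) with (Y / E - t * Q) by (field; lra).
  replace ((Z / Q + t) * (Q * E)) with ((Z + t * Q) * E) in H1, H2 by (field; lra).
  assert (E1 : Y / E - (Z + t * Q) = (Y - (Z + t * Q) * E) / E) by (field; lra).
  assert (E2 : Z + t * Q + 1 - Y / E = ((Z + t * Q) * E + E - Y) / E) by (field; lra).
  assert (0 < (Y - (Z + t * Q) * E) / E) by (apply Rdiv_lt_0_compat; lra).
  assert (0 < ((Z + t * Q) * E + E - Y) / E) by (apply Rdiv_lt_0_compat; lra).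
  lra.
Qed.

Lemma fst_of_nat_le n : (fst (Cantor.of_nat n) <= n)%nat.
Proof.
  pose proof (to_nat_non_decreasing (fst (Cantor.of_nat n)) (snd (Cantor.of_nat n))).
  rewrite <- surjective_pairing, cancel_to_of in H. lia.
Qed.

Lemma len_flat_seq {B} (f : nat -> list B) N :
  INR (length (flat_map f (seq 0 (S N)))) = sum_f_R0 (fun n => INR (length (f n))) N.
Proof.
  induction N.
  - simpl. rewrite length_app. simpl. rewrite Nat.add_0_r. reflexivity.
  - rewrite seq_S, flat_map_app, length_app, plus_INR, IHN. simpl.
    rewrite length_app. simpl. rewrite Nat.add_0_r. reflexivity.
Qed.

Lemma INR2 : INR 2 = 2.
Proof. simpl; lra. Qed.

Lemma scal_sum' (An : nat -> R) N x : sum_f_R0 An N * x = sum_f_R0 (fun i => An i * x) N.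
Proof. rewrite <- scal_sum. ring. Qed.

Lemma ML_sum d (K : pt (S d) -> Prop) M (T : nat -> pt (S d)) J :
  0 <= M -> (1 <= J)%nat ->
  (forall j x, (j < J)%nat -> K x -> forall k, Rabs (x k + T j k) <= M) ->
  (forall j l x y, (j < J)%nat -> (l < J)%nat -> j <> l -> K x -> K y ->
       (forall k, x k + T j k = y k + T l k) -> False) ->
  forall N, sum_f_R0 (fun n => box_vol (ca K M n) (cb K M n)) N <= (4 * M + 3) ^ (S d) / INR J.
Proof.
  intros HM HJ HTb Hdis N.
  set (D := S d).
  set (L := (N + 2)%nat).
  set (qn := fun n => fst (Cantor.of_nat n)).
  set (cc := fun n => (2 ^ (L - qn n) - 2)%nat).
  set (lo := fun n j => fun k : Fin.t D => up ((IZR (zz D M n k) / 2 ^ (qn n) + T j k) * 2 ^ L)).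
  set (Lat := fun n j => grid D (lo n j) (cc n)).
  set (pt_of := fun (y : Fin.t D -> Z) j => fun k => IZR (y k) / 2 ^ L - T j k).
  assert (Hlat : forall n j y, (n <= N)%nat -> good K M n -> In y (Lat n j) ->
                   ocell (qn n) (zz D M n) (pt_of y j)).
  { intros n j y Hn Hg Hy k. unfold Lat in Hy. pose proof (grid_in1 _ _ _ _ Hy k) as [Hy1 Hy2].
    assert (Hq : (qn n <= N)%nat) by (pose proof (fst_of_nat_le n); unfold qn; lia).
    set (q := qn n) in *. set (e := (L - q)%nat).
    assert (HL : 2 ^ L = 2 ^ q * 2 ^ e) by (rewrite <- pow_add; f_equal; unfold e, L; lia).
    assert (He : (4 <= 2 ^ e)%nat).
    { replace 4%nat with (2 ^ 2)%nat by reflexivity. apply Nat.pow_le_mono_r; unfold e, L; lia. }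
    assert (Hcc : INR (cc n) = 2 ^ e - 2).
    { unfold cc. fold q e. rewrite minus_INR by lia. rewrite pow_INR, INR2. simpl. lra. }
    unfold pt_of. rewrite HL.
    pose proof (pow2_pos q). pose proof (pow2_pos e).
    apply arith1; auto.
    - apply Rlt_le_trans with (IZR (lo n j k)).
      + unfold lo. fold q. rewrite HL. destruct (archimed ((IZR (zz D M n k) / 2 ^ q + T j k) * (2 ^ q * 2 ^ e))). lra.
      + apply IZR_le; auto.
    - assert (Hy3 : (y k <= lo n j k + Z.of_nat (cc n) - 1)%Z) by lia.
      apply IZR_le in Hy3. rewrite minus_IZR, plus_IZR, <- INR_IZR_INZ, Hcc in Hy3.
      unfold lo in Hy3. fold q in Hy3. rewrite HL in Hy3.
      destruct (archimed ((IZR (zz D M n k) / 2 ^ q + T j k) * (2 ^ q * 2 ^ e))). lra. }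
  assert (HlatK : forall n j y, (n <= N)%nat -> good K M n -> In y (Lat n j) -> K (pt_of y j)).
  { intros n j y Hn Hg Hy. pose proof (Hlat n j y Hn Hg Hy) as Ho.
    destruct Hg as [_ [Hs _]]. apply Hs. intros k; specialize (Ho k); unfold qn, D in Ho; lra. }

  set (RR := up (M * 2 ^ L)).
  assert (HRR : 0 < IZR RR /\ M * 2 ^ L < IZR RR /\ IZR RR <= M * 2 ^ L + 1).
  { pose proof (pow2_pos L). destruct (archimed (M * 2 ^ L)). fold RR in H0, H1.
    assert (0 <= M * 2 ^ L) by nra. lra. }
  assert (HRR0 : (0 < RR)%Z) by (apply lt_IZR; simpl; lra).
  set (G := grid D (fun _ => (- RR)%Z) (Z.to_nat (2 * RR + 1))).
  assert (HG : forall n j y, (n <= N)%nat -> good K M n -> (j < J)%nat -> In y (Lat n j) -> In y G).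
  { intros n j y Hn Hg Hj Hy. pose proof (HTb j (pt_of y j) Hj (HlatK n j y Hn Hg Hy)) as Hb.
    apply grid_in2. intros k. specialize (Hb k). unfold pt_of in Hb.
    replace (IZR (y k) / 2 ^ L - T j k + T j k) with (IZR (y k) / 2 ^ L) in Hb by ring.
    apply Rabs_le_inv in Hb. pose proof (pow2_pos L).
    assert (Hy2 : - (M * 2 ^ L) <= IZR (y k) <= M * 2 ^ L).
    { replace (IZR (y k)) with (IZR (y k) / 2 ^ L * 2 ^ L) by (field; lra). split; nra. }
    rewrite Z2Nat.id by lia.
    assert (IZR (y k) < IZR RR) by lra. assert (IZR (- RR) < IZR (y k)) by (rewrite opp_IZR; lra).
    apply lt_IZR in H0. apply lt_IZR in H1. lia. }
  set (FF := fun n => if excluded_middle_informative (good K M n)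
                      then flat_map (fun j => Lat n j) (seq 0 J) else []).
  assert (HFF : forall n e, In e (FF n) -> good K M n /\ exists j, (j < J)%nat /\ In e (Lat n j)).
  { intros n e H. unfold FF in H. destruct excluded_middle_informative as [Hg|]; [|destruct H].
    split; auto. apply in_flat_map in H. destruct H as [j [Hj H]]. apply in_seq in Hj.
    exists j. split; auto. lia. }
  set (BigL := flat_map FF (seq 0 (S N))).
  assert (Hnd : NoDup BigL).
  { apply NoDup_flat_map; [apply seq_NoDup| |].
    - intros n Hn. apply in_seq in Hn. unfold FF. destruct excluded_middle_informative as [Hg|]; [|constructor].
      apply NoDup_flat_map; [apply seq_NoDup | intros; apply grid_nodup |].
      intros j l e Hj Hl Hjl H1 H2. apply in_seq in Hj. apply in_seq in Hl.
      apply (Hdis j l (pt_of e j) (pt_of e l)); auto; try lia.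
      + apply (HlatK n j e); auto; lia.
      + apply (HlatK n l e); auto; lia.
      + intros k; unfold pt_of; ring.
    - intros n n' e Hn Hn' Hnn' H1 H2. apply in_seq in Hn. apply in_seq in Hn'.
      apply HFF in H1. apply HFF in H2. destruct H1 as [Hg [j [Hj H1]]]. destruct H2 as [Hg' [j' [Hj' H2]]].
      destruct (Nat.eq_dec j j') as [<-|Hjj].
      + apply (cells_disj K (qn n) (zz D M n) (qn n') (zz D M n') (pt_of e j)).
        * apply Hg.
        * apply Hg'.
        * destruct (Nat.eq_dec (qn n) (qn n')) as [Hq|Hq]; [right|left; auto].
          intros Hz. apply Hnn'. destruct Hg as [Hlt _]. destruct Hg' as [Hlt' _].
          unfold zz in Hz. fold (qn n) (qn n') in Hz, Hlt, Hlt'. rewrite <- Hq in Hz, Hlt'.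
          apply (NoDup_nth (LL D M (qn n)) (fun _ => 0%Z)) in Hz; [| apply grid_nodup | auto | auto].
          rewrite <- (cancel_to_of n), <- (cancel_to_of n'). f_equal.
          rewrite (surjective_pairing (Cantor.of_nat n)), (surjective_pairing (Cantor.of_nat n')).
          fold (qn n) (qn n'). rewrite Hq, Hz. reflexivity.
        * apply (Hlat n j e); auto; lia.
        * apply (Hlat n' j e); auto; lia.
      + apply (Hdis j j' (pt_of e j) (pt_of e j')); auto.
        * apply (HlatK n j e); auto; lia.
        * apply (HlatK n' j' e); auto; lia.
        * intros k; unfold pt_of; ring. }
  assert (Hincl : incl BigL G).
  { intros e He. apply in_flat_map in He. destruct He as [n [Hn He]]. apply in_seq in Hn.
    apply HFF in He. destruct He as [Hg [j [Hj He]]]. apply (HG n j e); auto. lia. }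
  pose proof (NoDup_incl_length Hnd Hincl) as Hlen. apply le_INR in Hlen.
  unfold BigL in Hlen. rewrite len_flat_seq in Hlen.
  unfold G in Hlen. rewrite grid_len, pow_INR, INR_IZR_INZ, Z2Nat.id in Hlen by lia.
  rewrite plus_IZR, mult_IZR in Hlen.
  set (H2 := 2 ^ (L - 1)).
  assert (HH2 : 1 <= H2) by (apply pow_R1_Rle; lra).
  assert (HL2 : 2 ^ L = 2 * H2) by (unfold H2, L; replace (N + 2)%nat with (S (N + 1)) by lia; simpl; replace (N + 1 - 0)%nat with (N + 1)%nat by lia; reflexivity).
  assert (Hterm : forall n, (n <= N)%nat ->
     box_vol (ca K M n) (cb K M n) * (INR J * H2 ^ D) <= INR (length (FF n))).
  { intros n Hn. unfold box_vol, ca, cb, FF.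
    destruct (excluded_middle_informative (good K M n)) as [Hg|Hg].
    - rewrite (prod_fin_ext _ _ (fun _ => / 2 ^ fst (Cantor.of_nat n))).
      2:{ intros k. pose proof (pow2_pos (fst (Cantor.of_nat n))). field. lra. }
      rewrite prod_fin_const.
      rewrite (length_flat_map_const _ _ (cc n ^ D)%nat) by (intros; unfold Lat; apply grid_len).
      rewrite length_seq, mult_INR, pow_INR.
      fold (qn n).
      assert (Hq : (qn n <= N)%nat) by (pose proof (fst_of_nat_le n); unfold qn; lia).
      set (q := qn n) in *. set (e := (L - 1 - q)%nat).
      assert (HH : H2 = 2 ^ q * 2 ^ e) by (unfold H2; rewrite <- pow_add; f_equal; unfold e, L; lia).
      assert (He : (2 <= 2 ^ e)%nat).
      { replace 2%nat with (2 ^ 1)%nat at 1 by reflexivity. apply Nat.pow_le_mono_r; unfold e, L; lia. }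
      assert (Hcc : INR (cc n) = 2 * 2 ^ e - 2).
      { unfold cc. fold q. replace (L - q)%nat with (S e) by (unfold e, L; lia).
        rewrite minus_INR. rewrite pow_INR, INR2. simpl. lra.
        simpl. lia. }
      rewrite Hcc.
      assert (He2 : 2 <= 2 ^ e) by (apply le_INR in He; rewrite pow_INR, INR2 in He; simpl in He; lra).
      pose proof (pow2_pos q).
      apply Rle_trans with (INR J * (/ 2 ^ q * H2) ^ D).
      { right. unfold D. rewrite Rpow_mult_distr; ring. }
      apply Rmult_le_compat_l; [apply pos_INR|]. apply pow_incr. split.
      + rewrite HH. rewrite <- Rmult_assoc, Rinv_l by lra. lra.
      + rewrite HH. rewrite <- Rmult_assoc, Rinv_l by lra. lra.
    - simpl prod_fin. simpl length. simpl INR. rewrite Rminus_diag. ring_simplify. lra. }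
  assert (Hsum : sum_f_R0 (fun n => box_vol (ca K M n) (cb K M n)) N * (INR J * H2 ^ D)
                 <= (2 * IZR RR + 1) ^ D).
  { rewrite scal_sum' by idtac. eapply Rle_trans; [|exact Hlen]. apply sum_Rle. auto. }
  assert (HJ0 : 0 < INR J) by (apply lt_0_INR; lia).
  assert (Hfin : (2 * IZR RR + 1) ^ D <= (H2 * (4 * M + 3)) ^ D).
  { apply pow_incr. split; [lra|]. rewrite HL2 in HRR. nra. }
  rewrite Rpow_mult_distr in Hfin.
  assert (0 < H2 ^ D) by (apply pow_lt; lra).
  apply Rmult_le_reg_r with (INR J * H2 ^ D). nra.
  unfold Rdiv. replace ((4 * M + 3) ^ D * / INR J * (INR J * H2 ^ D)) with (H2 ^ D * (4 * M + 3) ^ D).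
  2:{ unfold D. field. lra. }
  eapply Rle_trans; [exact Hsum | exact Hfin].
Qed.

Lemma ML d (K : pt (S d) -> Prop) M (T : nat -> pt (S d)) J :
  0 <= M -> (1 <= J)%nat -> is_open K ->
  (forall x, K x -> forall k, Rabs (x k) <= M) ->
  (forall j x, (j < J)%nat -> K x -> forall k, Rabs (x k + T j k) <= M) ->
  (forall j l x y, (j < J)%nat -> (l < J)%nat -> j <> l -> K x -> K y ->
       (forall k, x k + T j k = y k + T l k) -> False) ->
  outer_le K ((4 * M + 3) ^ (S d) / INR J).
Proof.
  intros HM HJ HK HKb HTb Hdis. exists (ca K M), (cb K M). split; [|split].
  - intros; apply ca_le_cb.
  - apply ML_cover; auto.
  - apply (ML_sum d K M T J); auto.
Qed.

Lemma bound_choice (P : nat -> nat -> Prop) J :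
  (forall j, (j < J)%nat -> exists k, P j k) -> exists B, forall j, (j < J)%nat -> exists k, (k < B)%nat /\ P j k.
Proof.
  induction J; intros H.
  - exists 0%nat. intros; lia.
  - destruct IHJ as [B HB]. { intros j Hj; apply H; lia. }
    destruct (H J ltac:(lia)) as [k Hk].
    exists (Nat.max B (S k)). intros j Hj.
    destruct (Nat.eq_dec j J) as [->|Hne].
    + exists k. split; auto. lia.
    + destruct (HB j ltac:(lia)) as [k' [Hk' Hk'']]. exists k'. split; auto. lia.
Qed.

Lemma np_bound (w : nat -> nat) : ~ eventually_periodic w -> forall J, exists N, (J <= N)%nat /\
  forall j l, (j < l)%nat -> (l < J)%nat -> exists k, (l + k < N)%nat /\ w (j + k)%nat <> w (l + k)%nat.
Proof.
  intros Hnp J. induction J.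
  - exists 0%nat. split; auto. intros; lia.
  - destruct IHJ as [N0 [HN0 H0]].
    destruct (bound_choice (fun j k => w (j + k)%nat <> w (J + k)%nat) J) as [B HB].
    { intros j Hj. apply NNPP. intros Hne. apply Hnp. exists j, (J - j)%nat. split; [lia|].
      intros k. apply NNPP. intros Hk. apply Hne. exists k.
      replace (J + k)%nat with (j + (J - j) + k)%nat by lia. auto. }
    exists (Nat.max (S N0) (J + B + 1)). split; [lia|].
    intros j l Hjl Hl. destruct (Nat.eq_dec l J) as [->|Hne].
    + destruct (HB j Hjl) as [k [Hk Hk']]. exists k. split; auto. lia.
    + destruct (H0 j l Hjl ltac:(lia)) as [k [Hk Hk']]. exists k. split; auto. lia.
Qed.

Fixpoint Tw {d} (v : nat -> pt d) (w : nat -> nat) (n : nat) : pt d :=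
  match n with
  | O => fun _ => 0
  | S n => vadd (Tw v w n) (v (w n))
  end.

Lemma interior_in {d} (X : pt d -> Prop) x : Defs.interior X x -> X x.
Proof. intros [r [Hr H]]. apply H. intros k. rewrite Rminus_diag, Rabs_R0. auto. Qed.

Lemma outer_le_empty_null d (X : pt (S d) -> Prop) e : 0 < e -> (forall x, ~ X x) -> outer_le X e.
Proof.
  intros He HX. exists (fun _ _ => 0), (fun _ _ => 0). split; [|split].
  - intros; lra.
  - intros x Hx; destruct (HX x Hx).
  - intros N. rewrite (sum_eq _ (fun _ => 0)).
    + clear -He. induction N; simpl; lra.
    + intros i _. unfold box_vol. simpl. ring.
Qed.

Lemma Kopen {d} (Q : nat -> pt d -> Prop) (T : nat -> pt d) N :
  is_open (fun x => forall n, (n < N)%nat -> Defs.interior (Q n) (vadd x (T n))).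
Proof.
  intros x Hx. induction N.
  - exists 1. split; [lra|]. intros y _ n Hn; lia.
  - destruct IHN as [r1 [Hr1 H1]]. { intros n Hn; apply Hx; lia. }
    destruct (Hx N (Nat.lt_succ_diag_r N)) as [r2 [Hr2 H2]].
    exists (Rmin r1 (r2/2)). split. { apply Rmin_glb_lt; lra. }
    pose proof (Rmin_r r1 (r2/2)). pose proof (Rmin_l r1 (r2/2)).
    intros y Hy n Hn. destruct (Nat.eq_dec n N) as [->|Hne].
    + exists (r2/2). split; [lra|]. intros z Hz. apply H2. intros k. specialize (Hz k). specialize (Hy k).
      unfold vadd in *.
      replace (z k - (x k + T N k)) with ((z k - (y k + T N k)) + (y k - x k)) by ring.
      eapply Rle_lt_trans; [apply Rabs_triang|]. lra.
    + apply H1; [|lia]. intros k. specialize (Hy k). lra.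
Qed.

Theorem lemma2p7 (d m : nat) (Omega : pt d -> Prop) (P : nat -> pt d -> Prop)
  (v : nat -> pt d) (i : pt d -> nat)
  (HF : piecewise_translation Omega m P v i)
  (w : nat -> nat) (Hw : forall n, (w n < m)%nat)
  (Hnp : ~ eventually_periodic w) :
  leb_null (fun x => Omega x /\ fate v i x = w).
Proof.
  destruct HF as [HO [HPr [Hcov [Hdj [Hnull [Htr [Hi Hmeas]]]]]]].
  assert (Hm : (0 < m)%nat) by (specialize (Hw 0%nat); lia).
  destruct d as [|d].
  { exfalso. destruct (Hnull 0%nat Hm (/2) ltac:(lra)) as [a [b [_ [_ H]]]].
    specialize (H 0%nat). simpl in H. unfold box_vol in H. simpl in H. lra. }
  destruct HO as [[_ [M0 HM0]] _].
  set (M := Rabs M0).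
  assert (HOb : forall x, Omega x -> forall k, Rabs (x k) <= M).
  { intros x Hx k. eapply Rle_trans; [apply HM0; auto | apply RRle_abs]. }
  assert (HM : 0 <= M) by apply Rabs_pos.
  set (T := Tw v w).
  assert (Hint : forall k x, (k < m)%nat -> Defs.interior (P k) x -> Omega x /\ i x = k).
  { intros k x Hk Hx. pose proof (interior_in _ _ Hx) as HPx.
    assert (HOx : Omega x) by (apply Hcov; eauto). split; auto.
    destruct (Hi x HOx) as [Hix HPix]. destruct (Nat.eq_dec (i x) k) as [|Hne]; auto.
    exfalso. destruct (Hdj k (i x) x Hk Hix (fun e => Hne (eq_sym e)) HPx HPix) as [[_ Hb] _]. auto. }
  intros eps Heps.
  set (C := (4 * M + 3) ^ S d).
  assert (HC : 0 < C) by (apply pow_lt; lra).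
  destruct (archimed (2 * C / eps)) as [HJa _].
  set (J := S (Z.to_nat (up (2 * C / eps)))).
  assert (HJ : C / INR J <= eps / 2).
  { assert (H1 : 2 * C / eps < INR J).
    { unfold J. rewrite S_INR. destruct (Z_le_gt_dec 0 (up (2 * C / eps))) as [Hle|Hgt].
      - rewrite INR_IZR_INZ, Z2Nat.id by auto. lra.
      - assert (0 < 2 * C / eps) by (apply Rdiv_lt_0_compat; lra).
        apply Z.gt_lt in Hgt. apply IZR_lt in Hgt. lra. }
    assert (HJ0 : 0 < INR J) by (unfold J; apply lt_0_INR; lia).
    apply Rmult_le_reg_r with (INR J); auto. unfold Rdiv. rewrite Rmult_assoc, Rinv_l by lra.
    replace (2 * C / eps) with (2 * C * / eps) in H1 by reflexivity.
    apply Rmult_lt_compat_l with (r := eps) in H1; auto.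
    replace (eps * (2 * C * / eps)) with (2 * C) in H1 by (field; lra). lra. }
  destruct (np_bound w Hnp J) as [N [HJN HN]].
  set (K := fun x => forall n, (n < N)%nat -> Defs.interior (P (w n)) (vadd x (T n))).

  assert (HKo : is_open K) by apply Kopen.
  assert (HT0 : forall x, vadd x (T 0%nat) = x).
  { intros; apply functional_extensionality; intros; unfold vadd, T; simpl; ring. }
  assert (HKb : forall x, K x -> forall k, Rabs (x k) <= M).
  { intros x Hx. apply HOb. rewrite <- (HT0 x). apply (Hint (w 0%nat) _ (Hw 0%nat)). apply Hx. unfold J in HJN. lia. }
  assert (HTb : forall j x, (j < J)%nat -> K x -> forall k, Rabs (x k + T j k) <= M).
  { intros j x Hj Hx k. apply (HOb (vadd x (T j))). apply (Hint (w j) _ (Hw j)). apply Hx. lia. }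
  assert (Hdis0 : forall j l x y, (j < l)%nat -> (l < J)%nat -> K x -> K y -> vadd x (T j) = vadd y (T l) -> False).
  { intros j l x y Hjl Hl Hx Hy Hxy.
    assert (Hc : forall k, (l + k < N)%nat -> vadd x (T (j+k)%nat) = vadd y (T (l+k)%nat) /\ w (j+k)%nat = w (l+k)%nat).
    { induction k; intros Hk.
      - rewrite !Nat.add_0_r. split; auto.
        rewrite <- (proj2 (Hint _ _ (Hw j) (Hx j ltac:(lia)))), <- (proj2 (Hint _ _ (Hw l) (Hy l ltac:(lia)))).
        rewrite Hxy. reflexivity.
      - destruct (IHk ltac:(lia)) as [E1 E2].
        assert (E3 : vadd x (T (j + S k)%nat) = vadd y (T (l + S k)%nat)).
        { rewrite !Nat.add_succ_r. apply functional_extensionality. intros c. unfold T; simpl. unfold vadd in *.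
          apply (f_equal (fun f => f c)) in E1. unfold T in E1. rewrite E2. lra. }
        split; auto.
        rewrite <- (proj2 (Hint _ _ (Hw (j + S k)%nat) (Hx (j + S k)%nat ltac:(lia)))).
        rewrite <- (proj2 (Hint _ _ (Hw (l + S k)%nat) (Hy (l + S k)%nat ltac:(lia)))).
        rewrite E3; reflexivity. }
    destruct (HN j l Hjl Hl) as [k [Hk Hne]]. apply Hne. apply (Hc k Hk). }
  assert (Hdis : forall j l x y, (j < J)%nat -> (l < J)%nat -> j <> l -> K x -> K y ->
       (forall k, x k + T j k = y k + T l k) -> False).
  { intros j l x y Hj Hl Hjl Hx Hy Hxy.
    assert (E : vadd x (T j) = vadd y (T l)) by (apply functional_extensionality; exact Hxy).
    destruct (Nat.lt_total j l) as [H1|[H1|H1]].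
    - exact (Hdis0 j l x y H1 Hl Hx Hy E).
    - lia.
    - exact (Hdis0 l j y x H1 Hj Hy Hx (eq_sym E)). }
  pose proof (ML d K M T J HM ltac:(unfold J; lia) HKo HKb HTb Hdis) as HKout. fold C in HKout.
  assert (HZ : forall N' e, 0 < e ->
     outer_le (fun x => exists n, (n < N')%nat /\ Defs.boundary (P (w n)) (vadd x (T n))) e).
  { induction N'; intros e He.
    - apply outer_le_empty_null; auto. intros x [n [Hn _]]; lia.
    - apply (outer_le_mono _ (fun x => (exists n, (n < N')%nat /\ Defs.boundary (P (w n)) (vadd x (T n))) \/ Defs.boundary (P (w N')) (vadd x (T N'))) e (e/2 + e/2)).
      + intros x [n [Hn Hb]]. destruct (Nat.eq_dec n N') as [->|Hne]; [right; auto| left; exists n; split; auto; lia].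
      + lra.
      + apply outer_le_union; [apply IHN'; lra | apply (outer_le_translate (Defs.boundary (P (w N')))); apply Hnull; [apply Hw | lra]]. }
  apply (outer_le_mono _ (fun x => K x \/ (exists n, (n < N)%nat /\ Defs.boundary (P (w n)) (vadd x (T n)))) eps (eps/2 + eps/2)); [ | lra | apply outer_le_union; [| apply (HZ N); lra]].
  - intros x [HOx Hfate].
    assert (Hit : forall n, Nat.iter n (pt_map v i) x = vadd x (T n) /\ Omega (vadd x (T n))).
    { induction n.
      - simpl. rewrite HT0. auto.
      - destruct IHn as [E1 E2]. simpl Nat.iter. rewrite E1.
        assert (Hin : i (vadd x (T n)) = w n).
        { rewrite <- Hfate. unfold fate. rewrite E1. reflexivity. }
        destruct (Hi _ E2) as [Hi1 Hi2].
        assert (E3 : pt_map v i (vadd x (T n)) = vadd x (T (S n))).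
        { unfold pt_map. rewrite Hin. apply functional_extensionality. intros c. unfold vadd, T; simpl. unfold vadd. ring. }
        rewrite E3. split; auto. rewrite <- E3. unfold pt_map. apply Htr; auto. }
    assert (HPn : forall n, P (w n) (vadd x (T n))).
    { intros n. destruct (Hit n) as [E1 E2]. destruct (Hi _ E2) as [_ H].
      replace (w n) with (i (vadd x (T n))); auto.
      rewrite <- Hfate. unfold fate. rewrite E1. reflexivity. }
    destruct (classic (K x)) as [HK|HK]; [left; auto| right].
    apply not_all_ex_not in HK. destruct HK as [n Hn]. exists n.
    apply imply_to_and in Hn. destruct Hn as [Hn1 Hn2]. split; auto. split; auto.
    intros r Hr. exists (vadd x (T n)). split; auto. intros k. rewrite Rminus_diag, Rabs_R0. auto.
  - eapply outer_le_mono; [intros; eauto | exact HJ | exact HKout].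
Qed.
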